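(* Let $1\le t\le k$, $d\ge k+1$ and $0<\beta\le1/2$. Let $X\in\mathbb{R}^{t\times t}$ be a symmetric matrix and $Z\in\mathbb{R}^t$ a vector with $|X_{ij}|\le\frac{\beta}{t+1}$ for all $i,j\in[t]$ and $|Z_i|\le\frac{\beta}{t+1}$ for all $i\in[t]$. Then there exist $y_1,\dots,y_t\in[-1,1]^d$ such that $X_{ij}=\langle y_i,y_j\rangle$ for $i\ne j$, $X_{ii}=\langle y_i,y_i\rangle-\beta$, and $Z_i=\langle y_i,\mathbf 1\rangle$ for all $i,j\in[t]$, where $\mathbf 1=(1,\dots,1)\in\mathbb{R}^d$. *)

(* Defs.v *)
From mathcomp Require Import all_boot all_order all_algebra.
From mathcomp Require Import reals.
Set Implicit Arguments. Unset Strict Implicit. Unset Printing Implicit Defensive.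
Import Order.TTheory GRing.Theory Num.Theory.
Local Open Scope ring_scope.

Definition dotv (R : realType) (d : nat) (u v : 'rV[R]_d) : R :=
  \sum_(l < d) u 0 l * v 0 l.

Definition onesv (R : realType) (d : nat) : 'rV[R]_d := const_mx 1.

(* Main.v *)
Require Import Defs.
From mathcomp Require Import all_boot all_order all_algebra.
From mathcomp Require Import reals ring lra.
Set Implicit Arguments. Unset Strict Implicit. Unset Printing Implicit Defensive.
Import Order.TTheory GRing.Theory Num.Theory.
Local Open Scope ring_scope.

Section Chol.
Variable R : rcfType.

Definition posdef n (A : 'M[R]_n) :=
  forall v : 'rV[R]_n, v != 0 -> 0 < (v *m A *m v^T) 0 0.

Lemma chol n : forall p (A : 'M[R]_n), (n <= p)%N -> A^T = A -> posdef A ->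
  exists V : 'M[R]_(n, p), V *m V^T = A.
Proof.
elim: n => [|n IH] p A np hsym hpd.
  by exists 0; apply/matrixP => -[].
case: p np => [//|q] np.
change (exists V : 'M[R]_(1 + n, 1 + q), V *m V^T = A).
move: A hsym hpd; change (forall A : 'M[R]_(1+n), A^T = A -> posdef A ->
  exists V : 'M[R]_(1 + n, 1 + q), V *m V^T = A).
move=> A; rewrite -[A]submxK.
move: (ulsubmx A) (ursubmx A) (dlsubmx A) (drsubmx A) => A1 r c D.
rewrite tr_block_mx => /eq_block_mx [h1 h2 h3 h4] hpd.
set a := A1 0 0.
have A1E : A1 = a%:M by apply: mx11_scalar.
have blockq : forall (v1 : 'M[R]_1) (v2 : 'rV[R]_n),
  row_mx v1 v2 *m block_mx A1 r c D *m (row_mx v1 v2)^T =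
  (v1 *m A1 + v2 *m c) *m v1^T + (v1 *m r + v2 *m D) *m v2^T.
  by move=> v1 v2; rewrite mul_row_block tr_row_mx mul_row_col.
have a0 : 0 < a.
  have := hpd (row_mx 1 0); rewrite blockq !mul0mx !addr0 mul1mx trmx1 mulmx1.
  rewrite trmx0 mulmx0 addr0.
  by apply; rewrite row_mx_eq0 negb_and oner_neq0.
have an0 : a != 0 by rewrite gt_eqF.
set S := D - a^-1 *: (c *m r).
have hS : S^T = S.
  by rewrite /S raddfB /= linearZ /= trmx_mul h3 h2 h4.
have pS : posdef S.
  move=> x x0.
  have := hpd (row_mx (- (a^-1) *: (x *m c)) x).
  rewrite blockq A1E mul_mx_scalar scalerA mulrN mulfV // scaleN1r addNr mul0mx add0r.
  have -> : - a^-1 *: (x *m c) *m r + x *m D = x *m S.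
    by rewrite /S mulmxBr -scalemxAl -scalemxAr mulmxA scaleNr addrC.
  by apply; rewrite row_mx_eq0 negb_and x0 orbT.
have [V' hV'] := IH q S np hS pS.
set sa := Num.sqrt a.
have sa0 : 0 < sa by rewrite sqrtr_gt0.
have san0 : sa != 0 by rewrite gt_eqF.
exists (block_mx (sa%:M : 'M_1) (0 : 'M_(1, q)) (sa^-1 *: c) V').
rewrite tr_block_mx mulmx_block !trmx0 !mulmx0 !mul0mx !addr0 hV'.
rewrite tr_scalar_mx -scalar_mxM -expr2 sqr_sqrtr ?ltW // -A1E.
rewrite mul_scalar_mx linearZ /= scalerA mulfV // scale1r h2.
rewrite mul_mx_scalar scalerA mulfV // scale1r.
rewrite -scalemxAl -scalemxAr scalerA -invfM -expr2 sqr_sqrtr ?ltW //.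
by rewrite /S addrC subrK.
Qed.

Definition quad n (v : 'rV[R]_n) (M : 'M[R]_n) :=
  \sum_i \sum_j v 0 i * M i j * v 0 j.

Lemma quadE n (v : 'rV[R]_n) (M : 'M[R]_n) : (v *m M *m v^T) 0 0 = quad v M.
Proof.
rewrite mxE /quad exchange_big /=; apply: eq_bigr => j _.
rewrite !mxE mulr_suml; by apply: eq_bigr => i _.
Qed.

Lemma term_bound (a m b e : R) : `|m| <= e ->
  `|a * m * b| <= e / 2 * (a ^+ 2 + b ^+ 2).
Proof.
move=> hm; rewrite !normrM -(real_normK (num_real a)) -(real_normK (num_real b)).
have ha := normr_ge0 a; have hb := normr_ge0 b; have hm0 := normr_ge0 m.
set A := `|a| in ha *; set B := `|b| in hb *; set M := `|m| in hm hm0 *.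
have h1 : 0 <= A * B * (e - M) by rewrite mulr_ge0 ?mulr_ge0 ?subr_ge0.
have h2 : 0 <= (A - B) ^+ 2 by apply: sqr_ge0.
nra.
Qed.

Lemma quad_bound n (v : 'rV[R]_n) (M : 'M[R]_n) e :
  (forall i j, `|M i j| <= e) ->
  `|quad v M| <= e * n%:R * \sum_i v 0 i ^+ 2.
Proof.
move=> hM; rewrite /quad.
apply: le_trans (ler_norm_sum _ _ _) _.
apply: le_trans (ler_sum _ (fun i _ => ler_norm_sum _ _ _)) _.
apply: le_trans (ler_sum _ (fun i _ => ler_sum _ (fun j _ => term_bound (v 0 i) (v 0 j) (hM i j)))) _.
rewrite le_eqVlt; apply/orP; left; apply/eqP.
under eq_bigr do rewrite -mulr_sumr big_split /= sumr_const card_ord.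
rewrite -mulr_sumr big_split /= sumr_const card_ord sumrMnl.
set Q := \sum_i _.
rewrite -mulr_natr; by field.
Qed.


Lemma trmxB m n (A B : 'M[R]_(m, n)) : (A - B)^T = A^T - B^T.
Proof. by apply/matrixP => i j; rewrite !mxE. Qed.
Lemma trmxZ m n a (A : 'M[R]_(m, n)) : (a *: A)^T = a *: A^T.
Proof. by apply/matrixP => i j; rewrite !mxE. Qed.

Lemma householder d' : (1 <= d')%N ->
  exists H : 'M[R]_(d'.+1), H *m H^T = 1%:M /\
     H *m (const_mx 1 : 'cV_(d'.+1)) = Num.sqrt (d'.+1)%:R *: delta_mx 0 0.
Proof.
move=> hd.
set d := d'.+1.
set s := Num.sqrt d%:R.
have d2 : 2 <= d%:R :> R by rewrite ler_nat ltnS.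
have s0 : 0 < s by rewrite sqrtr_gt0; lra.
have ss : s ^+ 2 = d%:R by rewrite sqr_sqrtr // ler0n.
have sn0 : s != 0 by rewrite gt_eqF.
have s1 : s != 1.
  apply/eqP => h; move: ss; rewrite h expr1n => h1; lra.
set u : 'cV[R]_d := s^-1 *: const_mx 1.
set e0 : 'cV[R]_d := delta_mx 0 0.
have he0e0 : e0^T *m e0 = 1.
  by rewrite /e0 trmx_delta -rowE; apply/matrixP => i j; rewrite !ord1 !mxE eqxx.
have he0u : e0^T *m u = s^-1%:M.
  by rewrite /e0 trmx_delta -rowE; apply/matrixP => i j; rewrite !ord1 !mxE eqxx mulr1.
have hue0 : u^T *m e0 = s^-1%:M.
  by rewrite -[e0]trmxK -trmx_mul he0u tr_scalar_mx.
have huu : u^T *m u = 1.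
  apply/matrixP => i j; rewrite !ord1 !mxE.
  under eq_bigr do rewrite !mxE mulr1.
  rewrite sumr_const card_ord -mulr_natr -expr2 exprVn ss mulVf //.
  by rewrite pnatr_eq0.
set w := e0 - u.
set q := 2 - 2 * s^-1.
set c := 2 / q.
have qn0 : q != 0.
  apply/eqP => h.
  have hi : s^-1 = 1 by move: h; rewrite /q; lra.
  have : s = 1 by rewrite -[s]mulr1 -hi mulfV.
  by move/eqP; rewrite (negbTE s1).
have trw : w^T = e0^T - u^T by apply/matrixP => i j; rewrite !mxE.
have hww : w^T *m w = q%:M.
  rewrite trw /w mulmxBl !mulmxBr he0e0 he0u hue0 huu.
  apply/matrixP => i j; rewrite !ord1 !mxE /q eqxx /=; ring.
have hwu : w^T *m u = (s^-1 - 1)%:M.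
  rewrite trw mulmxBl he0u huu.
  by apply/matrixP => i j; rewrite !ord1 !mxE eqxx.
have wE : w = e0 - u by [].
clearbody w.
exists (1%:M - c *: (w *m w^T)); split.
  rewrite trmxB trmxZ trmx_mul trmxK trmx1.
  rewrite mulmxBl !mulmxBr mul1mx mulmx1 -!scalemxAl -!scalemxAr !scalerA.
  rewrite mul1mx !mulmxA -[w *m w^T *m w]mulmxA hww mul_mx_scalar -scalemxAl scalerA.
  have -> : c * c * q = c + c by rewrite /c; field.
  by rewrite scalerDl opprB addrK subrK.
have -> : (const_mx 1 : 'cV_d) = s *: u by rewrite /u scalerA mulfV // scale1r.
rewrite -scalemxAr; congr (_ *: _).
rewrite mulmxBl mul1mx -scalemxAl -mulmxA hwu mul_mx_scalar scalerA.
have -> : c * (s^-1 - 1) = -1.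
  rewrite /c /q; field; rewrite sn0 /=; apply/eqP => h; move/eqP: s1; apply; lra.
by rewrite scaleN1r opprK wE addrC subrK.
Qed.

Lemma mx00DB (P Q S : 'M[R]_1) : (P + Q - S) 0 0 = P 0 0 + Q 0 0 - S 0 0.
Proof. by rewrite !mxE. Qed.

Lemma mx00Z a (P : 'M[R]_1) : (a *: P) 0 0 = a * P 0 0.
Proof. by rewrite mxE. Qed.

Lemma sq_le_sum n (f : 'I_n -> R) l : f l ^+ 2 <= \sum_i f i ^+ 2.
Proof.
rewrite (bigD1 l) //= lerDl; apply: sumr_ge0 => i _; exact: sqr_ge0.
Qed.

End Chol.

Unset Implicit Arguments.

Theorem mainTheorem10 (R : realType) (t k d : nat) (beta : R)
  (X : 'M[R]_t) (Z : 'I_t -> R) :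
  (1 <= t)%N -> (t <= k)%N -> (k.+1 <= d)%N ->
  0 < beta -> beta <= 1 / 2 ->
  X^T = X ->
  (forall i j : 'I_t, `|X i j| <= beta / t.+1%:R) ->
  (forall i : 'I_t, `|Z i| <= beta / t.+1%:R) ->
  exists y : 'I_t -> 'rV[R]_d,
    (forall i : 'I_t, forall l : 'I_d, -1 <= y i 0 l <= 1) /\
    (forall i j : 'I_t, i != j -> X i j = dotv (y i) (y j)) /\
    (forall i : 'I_t, X i i = dotv (y i) (y i) - beta) /\
    (forall i : 'I_t, Z i = dotv (y i) (onesv R d)).
Proof.
move=> t1 tk kd b0 b12 Xs hX hZ.
case: d kd => [//|d'] kd.
have td : (t <= d')%N by apply: leq_trans tk _.
have d1 : (1 <= d')%N by apply: leq_trans t1 td.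
set e := beta / t.+1%:R.
have hT : 2 <= t.+1%:R :> R by rewrite ler_nat ltnS.
have he : e * t.+1%:R = beta by rewrite /e mulfVK // pnatr_eq0.
have e0 : 0 < e by rewrite /e divr_gt0 // ltr0n.
set dinv := (d'.+1%:R : R)^-1.
have hd : 2 <= d'.+1%:R :> R by rewrite ler_nat ltnS.
have hdinv : dinv * d'.+1%:R = 1 by rewrite /dinv mulVf // pnatr_eq0.
have dinv0 : 0 <= dinv by rewrite /dinv invr_ge0 ler0n.
set Zc : 'cV[R]_t := \col_i Z i.
set A := X + beta%:M - dinv *: (Zc *m Zc^T).
have Xij : forall i j, X j i = X i j by move=> i j; rewrite -[X in LHS]Xs mxE.
have ZZij : forall i j, (Zc *m Zc^T) i j = Z i * Z j.
  by move=> i j; rewrite !mxE big_ord1 !mxE.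
have hAs : A^T = A.
  apply/matrixP => i j; rewrite !mxE Xij eq_sym.
  by rewrite !big_ord1 !mxE [Z j * _]mulrC.
have hApd : posdef A.
  move=> v v0.
  have -> : v *m A *m v^T = v *m X *m v^T + beta *: (v *m v^T)
       - dinv *: (v *m (Zc *m Zc^T) *m v^T).
    by rewrite /A mulmxBr mulmxDr mulmxBl mulmxDl mul_mx_scalar -!scalemxAl -!scalemxAr -scalemxAl.
  rewrite mx00DB !mx00Z !quadE.
  set Q := (v *m v^T) 0 0.
  have QE : Q = \sum_i v 0 i ^+ 2.
    by rewrite /Q mxE; apply: eq_bigr => i _; rewrite mxE expr2.
  have Q0 : 0 < Q.
    case: (pickP (fun i => v 0 i != 0)) => [i hi|h]; last first.
      exfalso; apply: (negP v0); apply/eqP/matrixP => a b.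
      by rewrite ord1 mxE; move: (h b) => /negbFE/eqP.
    apply: (@lt_le_trans _ _ (v 0 i ^+ 2)); last by rewrite QE sq_le_sum.
    by rewrite lt_def sqr_ge0 sqrf_eq0 hi.
  have bX := quad_bound v hX; rewrite -QE -/e in bX.
  have bZ : `|quad v (Zc *m Zc^T)| <= e * e * t%:R * Q.
    rewrite QE; apply: quad_bound => i j; rewrite ZZij normrM.
    by apply: ler_pM => //; rewrite hZ.
  move: bX bZ; set qx := quad v X; set qz := quad v _ => bX bZ.
  have hx : - (e * t%:R * Q) <= qx by move: bX; rewrite ler_norml => /andP [].
  have hz : qz <= e * e * t%:R * Q by move: bZ; rewrite ler_norml => /andP [].
  have hP : dinv * (e * t%:R) <= 1 / 4.
    have : e * t%:R <= 1/2 by move: he; rewrite mulrSr; nra.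
    have : dinv <= 1/2 by nra.
    have : 0 <= e * t%:R by rewrite mulr_ge0 ?ler0n ?ltW.
    nra.
  have h1 : dinv * qz <= dinv * (e * t%:R) * e * Q.
    have := ler_wpM2l dinv0 hz; nra.
  have h2 : 0 < e * Q * (1 - dinv * (e * t%:R)).
    by apply: mulr_gt0; [exact: mulr_gt0 | lra].
  move: he; rewrite mulrSr => he'.
  nra.
have [V hV] := chol td hAs hApd.
have [H [hH hH1]] := householder R d1.
set s := Num.sqrt (d'.+1%:R : R) in hH1.
have s0 : 0 < s by rewrite sqrtr_gt0; lra.
have sn0 : s != 0 by rewrite gt_eqF.
have ss : s ^+ 2 = d'.+1%:R by rewrite sqr_sqrtr // ler0n.
set W : 'M[R]_(t, 1 + d') := row_mx (s^-1 *: Zc) V.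
set Y : 'M[R]_(t, d'.+1) := W *m H.
have hYY : Y *m Y^T = X + beta%:M.
  rewrite /Y trmx_mul mulmxA -[W *m H *m H^T]mulmxA hH mulmx1.
  rewrite /W tr_row_mx mul_row_col hV trmxZ -scalemxAl -scalemxAr scalerA.
  rewrite -invfM -expr2 ss -/dinv /A.
  by rewrite addrC subrK.
have hY1 : Y *m const_mx 1 = Zc.
  rewrite /Y -mulmxA hH1 -scalemxAr -colE.
  apply/matrixP => i j; rewrite ord1 !mxE.
  have -> : (0 : 'I_(d'.+1)) = lshift d' (0 : 'I_1) by apply/val_inj.
  have := unsplitK (m:=1) (n:=d') (inl 0); rewrite /= => ->.
  by rewrite !mxE mulrA mulfV // mul1r.
have dotE : forall i j, dotv (row i Y) (row j Y) = (Y *m Y^T) i j.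
  by move=> i j; rewrite /dotv mxE; apply: eq_bigr => l _; rewrite !mxE.
have dot1 : forall i : 'I_t, dotv (row i Y) (onesv R d'.+1) = (Y *m (const_mx 1 : 'cV_(d'.+1))) i 0.
  by move=> i; rewrite /dotv /onesv [RHS]mxE; apply: eq_bigr => l _; rewrite !mxE.
exists (fun i : 'I_t => row i Y).
split; [|split; [|split]].
- move=> i l; rewrite mxE.
  have h1 := sq_le_sum (fun l => Y i l) l.
  have h2 : \sum_l Y i l ^+ 2 = X i i + beta.
    have := dotE i i; rewrite hYY !mxE eqxx mulr1n => <-.
    by rewrite /dotv; apply: eq_bigr => m _; rewrite !mxE expr2.
  have h3 := hX i i; rewrite ler_norml in h3; case/andP: h3 => _ h3.
  rewrite /= h2 in h1.
  have h3' : X i i <= e by exact: h3.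
  have he'' : e * t%:R + e = beta by rewrite -he mulrSr mulrDr mulr1.
  have ht1 : 1 <= t%:R :> R by rewrite ler1n.
  have het : e <= e * t%:R by nra.
  have : Y i l ^+ 2 <= 1 by lra.
  move=> h4; apply/andP; split; nra.
- by move=> i j ij; rewrite dotE hYY !mxE (negbTE ij) mulr0n addr0.
- by move=> i; rewrite dotE hYY !mxE eqxx mulr1n addrK.
- by move=> i; rewrite dot1 hY1 mxE.
Qed.
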